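(* Let $n\ge1$ and let $\mathcal{ORCT}_n$ be the semigroup of all full contractions of $[n]=\{1,\dots,n\}$ that are either order-preserving or order-reversing. Let $\textnormal{Reg}(\mathcal{ORCT}_n)$ be the set of regular elements of $\mathcal{ORCT}_n$. Then $$|\textnormal{Reg}(\mathcal{ORCT}_n)|=\frac{n(n-1)(2n-1)+6n}{3}-n.$$
   Context: $\mathcal{T}_n$ is the semigroup (under composition) of all maps $[n]\to[n]$. A map $\alpha\in\mathcal{T}_n$ is a contraction if $|x\alpha-y\alpha|\le |x-y|$ for all $x,y\in[n]$; it is order-preserving if $x\le y$ implies $x\alpha\le y\alpha$, and order-reversing if $x\le y$ implies $x\alpha\ge y\alpha$. $\mathcal{ORCT}_n$ is the set of contractions in $\mathcal{T}_n$ that are order-preserving or order-reversing; it is a subsemigroup of $\mathcal{T}_n$. An element $\alpha\in\mathcal{ORCT}_n$ is regular if there is $\beta\in\mathcal{ORCT}_n$ with $\alpha\beta\alpha=\alpha$. *)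

(* Defs.v *)
From mathcomp Require Import all_boot.
Set Implicit Arguments. Unset Strict Implicit. Unset Printing Implicit Defensive.

(* [n] = {1,...,n} is modelled by 'I_n = {0,...,n-1} (a shift, irrelevant for
   distances and order).  Full transformations T_n are {ffun 'I_n -> 'I_n}. *)

Definition ndist (a b : nat) : nat := maxn a b - minn a b.

Definition contraction n (f : {ffun 'I_n -> 'I_n}) : bool :=
  [forall x : 'I_n, forall y : 'I_n, ndist (f x) (f y) <= ndist x y].

Definition order_preserving n (f : {ffun 'I_n -> 'I_n}) : bool :=
  [forall x : 'I_n, forall y : 'I_n, (x <= y) ==> (f x <= f y)].

Definition order_reversing n (f : {ffun 'I_n -> 'I_n}) : bool :=
  [forall x : 'I_n, forall y : 'I_n, (x <= y) ==> (f y <= f x)].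

Definition ORCT n (f : {ffun 'I_n -> 'I_n}) : bool :=
  contraction f && (order_preserving f || order_reversing f).

(* product alpha*beta in the paper's right-action convention: x(ab) = (xa)b *)
Definition tmul n (a b : {ffun 'I_n -> 'I_n}) : {ffun 'I_n -> 'I_n} :=
  [ffun x => b (a x)].

Definition regular_ORCT n (a : {ffun 'I_n -> 'I_n}) : bool :=
  ORCT a && [exists b, ORCT b && (tmul (tmul a b) a == a)].

(* Main.v *)
Require Import Defs.
From mathcomp Require Import all_boot.
From mathcomp Require Import zify.
Set Implicit Arguments. Unset Strict Implicit. Unset Printing Implicit Defensive.

Definition form (p c d x : nat) := minn (maxn (x + c - p) c) (c + d).
Section Core.
Variables (m : nat) (A B : nat -> nat).
Hypothesis Amono : forall x y, x <= y -> y <= m -> A x <= A y.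
Hypothesis Acontr : forall x y, x <= y -> y <= m -> A y <= A x + (y - x).
Hypothesis Bcontr : forall y z, y <= m -> z <= m -> ndist (B y) (B z) <= ndist y z.
Hypothesis Ble : forall x, x <= m -> B (A x) <= m.
Hypothesis Ale : forall x, x <= m -> A x <= m.
Hypothesis ABA : forall x, x <= m -> A (B (A x)) = A x.

Lemma no_bad u w : u + 2 <= w -> w + 1 <= m -> A u + 1 = A (u+1) ->
  A (u+1) = A w -> A (w+1) = A w + 1 -> False.
Proof.
move=> h1 h2 e1 e2 e3.
have hy : B (A u) <= u.
  case: (leqP (B (A u)) u) => // h.
  have := Amono (x:=u+1) (y:=B (A u)) ltac:(lia) (Ble (x:=u) ltac:(lia)). rewrite ABA; lia.
have hz : w + 1 <= B (A (w+1)).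
  case: (leqP (w+1) (B (A (w+1)))) => // h.
  have := Amono (x:=B (A (w+1))) (y:=w) ltac:(lia) ltac:(lia). rewrite ABA; lia.
have := Bcontr (Ale (x:=u) ltac:(lia)) (Ale (x:=w+1) h2).
rewrite /ndist; lia.
Qed.

Variable p : nat.
Hypothesis hp : p <= m.
Hypothesis Ap : A p = A 0.
Hypothesis pmax : forall x, x <= m -> A x = A 0 -> x <= p.

Lemma step x : x + 1 <= m -> A (x+1) = A x \/ A (x+1) = A x + 1.
Proof. move=> h; have := Amono (x:=x) (y:=x+1) ltac:(lia) h; have := Acontr (x:=x) (y:=x+1) ltac:(lia) h. lia. Qed.

Lemma mid k : p + k <= m -> forall j, j <= k -> A (p + j) = minn (A 0 + j) (A m).
Proof.
elim: k => [|k IH] hk j hj.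
  have -> : j = 0 by lia. rewrite addn0 Ap. have := Amono (x:=0) (y:=m) ltac:(lia) (leqnn m). lia.
case: (leqP j k) => hjk; first by apply: IH => //; lia.
have -> : j = k.+1 by lia.
clear j hj hjk.
have IHk := IH ltac:(lia) k (leqnn k).
have hm := Amono (x:=p+k.+1) (y:=m) ltac:(lia) (leqnn m).
have hs := step (x:=p+k) ltac:(lia).
rewrite -addnA addn1 in hs.
case: (leqP (A m) (A (p+k))) => hAm.
  lia.
case: hs => hs; last lia.
exfalso.
case: k IH IHk hk hs hAm {hm} => [|k] IH IHk hk hs hAm.
  have := pmax (x:=p+1) ltac:(lia). rewrite addn0 in IHk hs. lia.
have IHk1 := IH ltac:(lia) k (leqnSn k).
set t := A (p + k.+1) in hs hAm IHk.
have ex : exists z, (z <= m) && (A z == t) by exists (p + k.+1); apply/andP; split => //; lia.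
have bnd : forall z, (z <= m) && (A z == t) -> z <= m by move=> z /andP[].
case: (ex_maxnP ex bnd) => w /andP[hw /eqP hwt] wmax.
have hw1 : p + k.+2 <= w.
  apply: wmax; apply/andP; split; first lia.
  by apply/eqP; rewrite hs.
have hwm : w + 1 <= m.
  case: (leqP (w+1) m) => // h. have ewm : w = m by lia. rewrite ewm in hwt. lia.
have hw1' : A (w+1) != t.
  apply/negP => /eqP h. have := wmax (w+1). rewrite h eqxx andbT. move=> /(_ hwm). lia.
have e3 : A (w+1) = A w + 1 by case: (step hwm); rewrite hwt; lia.
apply: (@no_bad (p+k) w); try lia.
  have -> : p + k + 1 = p + k.+1 by lia. rewrite -/t IHk IHk1. lia.
have -> : p + k + 1 = p + k.+1 by lia. by rewrite hwt.
Qed.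

Lemma formA : p + (A m - A 0) <= m /\ forall x, x <= m -> A x = form p (A 0) (A m - A 0) x.
Proof.
have hm0 := Amono (x:=0) (y:=m) ltac:(lia) (leqnn m).
split.
  have := mid (k:=m-p) ltac:(lia) (leqnn _). have -> : p + (m - p) = m by lia. lia.
move=> x hx; rewrite /form.
case: (leqP x p) => hxp.
  have := Amono (x:=0) (y:=x) ltac:(lia) hx. have := Amono (x:=x) (y:=p) hxp hp. lia.
have := mid (k:=x-p) ltac:(lia) (leqnn _). have -> : p + (x - p) = x by lia. lia.
Qed.
End Core.

Lemma form0 p c d : form p c d 0 = c.
Proof. rewrite /form; lia. Qed.
Lemma formm p c d m : p + d <= m -> form p c d m = c + d.
Proof. rewrite /form; lia. Qed.
Lemma formS p c d : 0 < d -> form p c d p.+1 = c + 1.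
Proof. rewrite /form; lia. Qed.
Lemma form_le p c d x : x <= p -> form p c d x = c.
Proof. rewrite /form; lia. Qed.

Section Ffun.
Variable m : nat.
Local Notation n := m.+1.
Local Notation T := {ffun 'I_n -> 'I_n}.

Definition phi (t : 'I_n * ('I_n * 'I_n)) : T :=
  [ffun x : 'I_n => inord (form t.2.1 t.2.2 t.1 x)].
Definition Gb (d p c : nat) : bool := (p + d <= m) && (c + d <= m) && ((d == 0) ==> (p == 0)).
Definition inD (t : 'I_n * ('I_n * 'I_n)) : bool := Gb t.1 t.2.1 t.2.2.
Definition RegP (a : T) := regular_ORCT a && order_preserving a.
Definition RegR (a : T) := regular_ORCT a && order_reversing a.

Lemma phi_val (t : 'I_n * ('I_n * 'I_n)) (x : 'I_n) : t.2.2 + t.1 <= m -> (phi t x : nat) = form t.2.1 t.2.2 t.1 x.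
Proof. move=> h; rewrite ffunE /= inordK //; rewrite /form; lia. Qed.

Lemma phi_contr (t : 'I_n * ('I_n * 'I_n)) : t.2.2 + t.1 <= m -> contraction (phi t).
Proof.
move=> h; apply/forallP => x; apply/forallP => y; rewrite !phi_val //.
rewrite /ndist /form; lia.
Qed.

Lemma phi_pres (t : 'I_n * ('I_n * 'I_n)) : t.2.2 + t.1 <= m -> order_preserving (phi t).
Proof.
move=> h; apply/forallP => x; apply/forallP => y; apply/implyP => hxy; rewrite !phi_val //.
rewrite /form; lia.
Qed.

Lemma phi_ORCT (t : 'I_n * ('I_n * 'I_n)) : t.2.2 + t.1 <= m -> ORCT (phi t).
Proof. by move=> h; rewrite /ORCT phi_contr // phi_pres. Qed.

Lemma phi_reg (t : 'I_n * ('I_n * 'I_n)) : inD t -> RegP (phi t).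
Proof.
case: t => d [p c]; rewrite /inD /Gb /= => /andP[/andP[h1 h2] _].
rewrite /RegP /regular_ORCT phi_ORCT // phi_pres // andbT /=.
apply/existsP; exists (phi (d, (c, p))); rewrite phi_ORCT //=.
apply/eqP/ffunP => x; rewrite !ffunE; congr inord.
by rewrite /form /= !inordK /=; lia.
Qed.

Lemma val_inord_lt (x : 'I_n) : inord (val x) = x.
Proof. exact: inord_val. Qed.

Lemma RegP_phi (a : T) : RegP a -> exists t, inD t && (a == phi t).
Proof.
case/andP => /andP[/andP[ca _] /existsP[b /andP[/andP[cb _] /eqP eab]]] pa.
pose A x := nat_of_ord (a (inord x)).
pose B y := nat_of_ord (b (inord y)).
have Amono : forall x y, x <= y -> y <= m -> A x <= A y.
  move=> x y hxy hy; rewrite /A.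
  move/forallP: pa => /(_ (inord x)) /forallP /(_ (inord y)) /implyP; apply.
  rewrite !inordK //; lia.
have Acontr : forall x y, x <= y -> y <= m -> A y <= A x + (y - x).
  move=> x y hxy hy; have := Amono x y hxy hy; rewrite /A.
  move/forallP: ca => /(_ (inord x)) /forallP /(_ (inord y)).
  rewrite !inordK; try lia. rewrite /ndist; lia.
have Bcontr : forall y z, y <= m -> z <= m -> ndist (B y) (B z) <= ndist y z.
  move=> y z hy hz; rewrite /B.
  move/forallP: cb => /(_ (inord y)) /forallP /(_ (inord z)).
  by rewrite !inordK.
have Ble : forall x, x <= m -> B (A x) <= m by move=> x _; rewrite /B -ltnS ltn_ord.
have Ale : forall x, x <= m -> A x <= m by move=> x _; rewrite /A -ltnS ltn_ord.
have ABA : forall x, x <= m -> A (B (A x)) = A x.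
  move=> x _; rewrite /A /B !inord_val.
  by have := congr1 (fun f : T => f (inord x)) eab; rewrite !ffunE => ->.
have a0 : a ord0 = a (inord 0) by congr (a _); apply: ord_inj; rewrite inordK.
have exi : exists x, (x <= m) && (A x == A 0) by exists 0; rewrite leq0n eqxx.
have bndi : forall x, (x <= m) && (A x == A 0) -> x <= m by move=> x /andP[].
case: (ex_maxnP exi bndi) => i /andP[hp /eqP Ap] imax.
have pmax : forall x, x <= m -> A x = A 0 -> x <= i.
  by move=> x hx hAx; apply: imax; rewrite hx hAx eqxx.

have [hpd hform] := formA Amono Acontr Bcontr Ble Ale ABA hp Ap pmax.
have hAm := Amono 0 m (leq0n _) (leqnn _).
have hAmm := Ale m (leqnn _).
pose d := A m - A 0.
pose p := if d == 0 then 0 else i.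
have ea0 : nat_of_ord (a ord0) = A 0 by rewrite /A -a0.
have hd : d <= m by rewrite /d; lia.
have hpm : p <= m by rewrite /p; case: ifP; lia.
have hcd : A 0 + d <= m by rewrite /d; lia.
exists (inord d, (inord p, a ord0)).
rewrite /inD /Gb /= !inordK ?ltnS //.
apply/andP; split.
  rewrite ea0 /p; case: ifP => /= /eqP hd0; apply/andP; (split; [apply/andP; split|]); lia.
apply/eqP/ffunP => x; apply: ord_inj.
rewrite phi_val /= ?inordK ?ltnS ?ea0 //.
have := hform (nat_of_ord x) ltac:(rewrite -ltnS ltn_ord).
rewrite /A inord_val => ->.
rewrite /p /d /form; case: ifP => /eqP hd0; rewrite /A in hd0 *; lia.
all: done.
Qed.

Lemma phi_inj : {in inD &, injective phi}.
Proof.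
move=> [d [p c]] [d' [p' c']]; rewrite !unfold_in /inD /Gb /=.
move=> /andP[/andP[h1 h2] h3] /andP[/andP[h1' h2'] h3'] e.
have ev : forall x : 'I_n, form p c d x = form p' c' d' x.
  move=> x; have := congr1 (fun f : T => nat_of_ord (f x)) e.
  by rewrite /= !phi_val.
have e0 := ev ord0. have em := ev ord_max.
rewrite /= !form0 in e0. have ec := e0. rewrite -ec in em h2' ev.
rewrite /= !formm // in em.
have ed : d = d' :> nat by lia.
have ep : p = p' :> nat.
  case: (posnP d) => hd0.
    move: h3 h3'; rewrite hd0 -ed hd0 /= => /eqP -> /eqP -> //.
  have e1 := ev (inord (p.+1)). have e2 := ev (inord (p'.+1)).
  rewrite -ed /= !inordK in e1 e2; try lia.
  rewrite formS // in e1; rewrite formS // in e2; try lia.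
  case: (ltngtP p p') => // hpp.
    by move: e1; rewrite form_le //; lia.
  by move: e2; rewrite form_le //; lia.
by congr (_, (_, _)); apply: ord_inj.
Qed.

Lemma reg_pres_or (a : T) : regular_ORCT a -> order_preserving a || order_reversing a.
Proof. by case/andP => /andP[]. Qed.

Lemma RegP_card_aux : #|[pred a | RegP a]| = #|inD|.
Proof.
rewrite -(card_in_imset phi_inj); apply: eq_card => a; rewrite !inE.
apply/idP/imsetP.
  by move=> /RegP_phi [t /andP[ht /eqP ->]]; exists t.
by move=> [t ht ->]; apply: phi_reg.
Qed.

Lemma sum_lt d : d <= m -> \sum_(c < n) ((c + d <= m) : nat) = n - d.
Proof.
move=> hd.
rewrite (eq_bigr (fun c : 'I_n => if (c < n - d) then 1 else 0)); last first.
  by move=> c _; case: ifP => h; case: leqP => h'; lia.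
rewrite -big_mkcond -(big_ord_widen n (fun _ => 1)) ?leq_subr //.
by rewrite sum_nat_const card_ord muln1.
Qed.

Definition Tsum k := \sum_(i < k) (k - i) * (k - i).

Lemma TsumE k : 6 * Tsum k = k * (k + 1) * (2 * k + 1).
Proof.
elim: k => [|k IH]; first by rewrite /Tsum big_ord0.
rewrite /Tsum big_ord_recl /=.
rewrite (eq_bigr (fun i : 'I_k => (k - i) * (k - i))); last by move=> i _; rewrite /bump /=; congr (_ * _); lia.
rewrite -/(Tsum k). nia.
Qed.

Lemma inD_card : #|inD| = n + Tsum m.
Proof.
rewrite -sum1_card big_mkcond /=.
rewrite (eq_bigr (fun t : 'I_n * ('I_n * 'I_n) => (Gb t.1 t.2.1 t.2.2 : nat))); last first.
  by move=> t _; rewrite /in_mem /= /inD; case: Gb.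
rewrite -(pair_bigA _ (fun (d : 'I_n) (pc : 'I_n * 'I_n) => (Gb d pc.1 pc.2 : nat))) /=.
rewrite (eq_bigr (fun d : 'I_n => if d == 0 :> nat then n else (n - d) * (n - d))); last first.
  move=> d _. rewrite -(pair_bigA _ (fun (p c : 'I_n) => (Gb d p c : nat))) /=.
  rewrite (eq_bigr (fun p : 'I_n => \sum_(c < n) (((p + d <= m) && ((d == 0 :> nat) ==> (p == 0 :> nat)) : nat) * ((c + d <= m) : nat)))); last first.
    move=> p _; apply: eq_bigr => c _; rewrite /Gb.
    by case: (p + d <= m); case: (c + d <= m); case: (_ ==> _).
  rewrite -big_distrlr /= sum_lt; last by rewrite -ltnS ltn_ord.
  case: (posnP d) => hd0.
    rewrite hd0 /= big_ord_recl /= big1 ?add0n ?mul1n ?subn0 //.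
    by move=> i _; rewrite /bump /= andbF.
  rewrite ?(negbTE (lt0n_neq0 hd0)).
  rewrite (eq_bigr (fun p : 'I_n => ((p + d <= m) : nat))); last by move=> p _; rewrite implyFb andbT.
  by rewrite sum_lt // -ltnS ltn_ord.
rewrite big_ord_recl /=.
rewrite (eq_bigr (fun i : 'I_m => (m - i) * (m - i))) //.
Qed.

Lemma RegP_card : #|[pred a | RegP a]| = n + Tsum m.
Proof. by rewrite RegP_card_aux inD_card. Qed.

Definition g (a : T) : T := [ffun x => rev_ord (a x)].
Definition gb (b : T) : T := [ffun y => b (rev_ord y)].

Lemma gK : involutive g.
Proof. by move=> a; apply/ffunP => x; rewrite !ffunE rev_ordK. Qed.

Lemma rev_val (y : 'I_n) : nat_of_ord (rev_ord y) = m - y.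
Proof. by rewrite /= subSS. Qed.

Lemma ord_le (y : 'I_n) : nat_of_ord y <= m.
Proof. by rewrite -ltnS ltn_ord. Qed.

Lemma g_contr a : contraction a -> contraction (g a).
Proof.
move=> /forallP ca; apply/forallP => x; apply/forallP => y.
move/forallP: (ca x) => /(_ y). rewrite !ffunE !rev_val.
have := ord_le (a x); have := ord_le (a y). rewrite /ndist; lia.
Qed.

Lemma gb_contr b : contraction b -> contraction (gb b).
Proof.
move=> /forallP cb; apply/forallP => x; apply/forallP => y.
move/forallP: (cb (rev_ord x)) => /(_ (rev_ord y)). rewrite !ffunE !rev_val.
have := ord_le x; have := ord_le y. rewrite /ndist; lia.
Qed.

Lemma g_pres a : order_reversing a -> order_preserving (g a).
Proof.
move=> /forallP ra; apply/forallP => x; apply/forallP => y; apply/implyP => hxy.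
move/forallP: (ra x) => /(_ y) /implyP /(_ hxy). rewrite !ffunE !rev_val.
have := ord_le (a x); have := ord_le (a y). lia.
Qed.

Lemma g_rev a : order_preserving a -> order_reversing (g a).
Proof.
move=> /forallP ra; apply/forallP => x; apply/forallP => y; apply/implyP => hxy.
move/forallP: (ra x) => /(_ y) /implyP /(_ hxy). rewrite !ffunE !rev_val.
have := ord_le (a x); have := ord_le (a y). lia.
Qed.

Lemma gb_pres b : order_reversing b -> order_preserving (gb b).
Proof.
move=> /forallP ra; apply/forallP => x; apply/forallP => y; apply/implyP => hxy.
have hr : rev_ord y <= rev_ord x by rewrite !rev_val; have := ord_le x; have := ord_le y; lia.
move/forallP: (ra (rev_ord y)) => /(_ (rev_ord x)) /implyP /(_ hr). by rewrite !ffunE.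
Qed.

Lemma gb_rev b : order_preserving b -> order_reversing (gb b).
Proof.
move=> /forallP ra; apply/forallP => x; apply/forallP => y; apply/implyP => hxy.
have hr : rev_ord y <= rev_ord x by rewrite !rev_val; have := ord_le x; have := ord_le y; lia.
move/forallP: (ra (rev_ord y)) => /(_ (rev_ord x)) /implyP /(_ hr). by rewrite !ffunE.
Qed.

Lemma g_ORCT a : ORCT a -> ORCT (g a).
Proof.
case/andP => ca /orP[pa|ra]; rewrite /ORCT g_contr //=.
  by rewrite g_rev ?orbT.
by rewrite g_pres.
Qed.

Lemma gb_ORCT b : ORCT b -> ORCT (gb b).
Proof.
case/andP => cb /orP[pb|rb]; rewrite /ORCT gb_contr //=.
  by rewrite gb_rev ?orbT.
by rewrite gb_pres.
Qed.

Lemma g_reg a : regular_ORCT a -> regular_ORCT (g a).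
Proof.
case/andP => oa /existsP[b /andP[ob /eqP eab]].
rewrite /regular_ORCT g_ORCT //=; apply/existsP; exists (gb b).
rewrite gb_ORCT //=; apply/eqP/ffunP => x.
have := congr1 (fun f : T => f x) eab. rewrite !ffunE rev_ordK => ->.
by [].
Qed.

Lemma RegR_g a : RegR a = RegP (g a).
Proof.
apply/idP/idP.
  by case/andP => ra rv; rewrite /RegP g_reg // g_pres.
by case/andP => ra pa; rewrite -(gK a) /RegR g_reg // g_rev.
Qed.

Lemma RegR_card : #|[pred a | RegR a]| = #|[pred a | RegP a]|.
Proof.
transitivity #|g @^-1: [set a | RegP a]|.
  by apply: eq_card => a; rewrite !inE RegR_g.
rewrite card_preimset; last exact: can_inj gK.
by apply: eq_card => a; rewrite !inE.
Qed.

Lemma both_card : #|[predI [pred a | RegP a] & [pred a | RegR a]]| = n.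
Proof.
transitivity #|(fun y : 'I_n => [ffun=> y] : T) @: setT|; last first.
  rewrite card_imset ?cardsT ?card_ord //.
  by move=> y z /ffunP /(_ ord0); rewrite !ffunE.
apply: eq_card => a; rewrite !inE.
apply/andP/imsetP.
  case=> /andP[_ /forallP pa] /andP[_ /forallP ra].
  exists (a ord0) => //; apply/ffunP => x; rewrite ffunE; apply: ord_inj; apply/eqP.
  rewrite eqn_leq.
  move/forallP: (pa ord0) => /(_ x) /implyP /(_ (leq0n _)) ->.
  by move/forallP: (ra ord0) => /(_ x) /implyP /(_ (leq0n _)) ->.
case=> y _ ->.
have hc : contraction ([ffun=> y] : T).
  by apply/forallP => u; apply/forallP => v; rewrite !ffunE /ndist maxnn minnn subnn.
have hp : order_preserving ([ffun=> y] : T).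
  by apply/forallP => u; apply/forallP => v; rewrite !ffunE leqnn implybT.
have hr : order_reversing ([ffun=> y] : T).
  by apply/forallP => u; apply/forallP => v; rewrite !ffunE leqnn implybT.
have ho : ORCT ([ffun=> y] : T) by rewrite /ORCT hc hp.
have hreg : regular_ORCT ([ffun=> y] : T).
  rewrite /regular_ORCT ho /=; apply/existsP; exists [ffun=> y]; rewrite ho /=.
  by apply/eqP/ffunP => x; rewrite !ffunE.
by rewrite /RegP /RegR hreg hp hr.
Qed.

Lemma count_main : #|[pred a : T | regular_ORCT a]| + n = 2 * (n + Tsum m).
Proof.
have -> : #|[pred a : T | regular_ORCT a]| = #|[predU [pred a | RegP a] & [pred a | RegR a]]|.
  apply: eq_card => a; rewrite !inE /RegP /RegR.
  case R: (regular_ORCT a) => //=. by have := reg_pres_or R.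
have := cardUI [pred a : T | RegP a] [pred a | RegR a].
rewrite both_card RegR_card RegP_card; by move=> ->; rewrite mul2n -addnn.
Qed.

End Ffun.

Theorem corollary3 (n : nat) (hn : 1 <= n) :
  #|[pred a : {ffun 'I_n -> 'I_n} | regular_ORCT a]| =
    (n * (n - 1) * (2 * n - 1) + 6 * n) %/ 3 - n.
Proof.
case: n hn => [//|m] _.
have hc := count_main m.
have hT := TsumE m.
have hX : m.+1 * (m.+1 - 1) * (2 * m.+1 - 1) = 6 * Tsum m.
  rewrite hT; nia.
rewrite hX.
move: hc; set R := #|_|; set t := Tsum m => hc.
have -> : 6 * t + 6 * m.+1 = (2 * t + 2 * m.+1) * 3 by lia.
rewrite mulnK //; lia.
Qed.
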